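(* Let $(G',\Sigma')$ be a signed graph on vertex set $\{v_1,\dots,v_k\}$, and for each $i\in\{1,\dots,k\}$ let $(G_i,\Sigma_i)$ be a signed graph, the sets $V(G_i)$ pairwise disjoint. Let $(G,\Sigma)$ be the signed graph obtained from $(G',\Sigma')$ by substituting $v_i$ with $(G_i,\Sigma_i)$ for every $i$. For each $i$, let $n_i=|V(G_i)|$, $m_i=\sum_{v_j\in N_{G'}(v_i)}n_j$, and let $\{\lambda_{i,1},\dots,\lambda_{i,n_i}\}$ be the spectrum (multiset of eigenvalues) of $L(G_i,\Sigma_i)$. Let $M$ be the $k\times k$ matrix with $M_{i,i}=\lambda_{i,n_i}+m_i$ and, for $i\neq j$, $M_{i,j}=n_j$ if $v_iv_j\in\Sigma'$, $M_{i,j}=-n_j$ if $v_iv_j\in E(G')\setminus\Sigma'$, and $M_{i,j}=0$ otherwise; let $\{\mu_1,\dots,\mu_k\}$ be the spectrum of $M$. If for every $i$ the all-ones vector $\mathbf{1}_{n_i}$ is a $\lambda_{i,n_i}$-eigenvector of $L(G_i,\Sigma_i)$, then the spectrum of $L(G,\Sigma)$ is the multiset \[\{\mu_i:i\in[k]\}\cup\bigcup_{i=1}^k\{\lambda_{i,j}+m_i:j\in[n_i-1]\}.\]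
   Context: All graphs are finite and simple. A signed graph is a pair $(G,\Sigma)$ with $\Sigma\subseteq E(G)$; edges in $\Sigma$ are odd, others even. The signed Laplacian is $L(G,\Sigma)=D(G)-A(G,\Sigma)$, $D(G)$ the diagonal degree matrix, $A(G,\Sigma)$ having $(i,j)$-entry $1$ for an even edge, $-1$ for an odd edge, $0$ otherwise. For signed graphs $(G,\Sigma)$, $(H,\Gamma)$ with disjoint vertex sets and $v\in V(G)$, substituting $v$ with $(H,\Gamma)$ yields the signed graph obtained from the disjoint union of $(G-v,\Sigma\setminus\delta(v))$ and $(H,\Gamma)$ (where $\delta(v)$ is the set of edges at $v$) by adding all edges $uv'$ with $u\in V(H)$, $v'\in N_G(v)$, where $uv'$ is odd exactly when $vv'$ is odd in $(G,\Sigma)$. Substituting every $v_i$ of $G'$ with $(G_i,\Sigma_i)$ thus gives the signed graph on $\bigcup_iV(G_i)$ containing each $(G_i,\Sigma_i)$, together with, for each edge $v_iv_j$ of $G'$, all edges between $V(G_i)$ and $V(G_j)$, each having the parity of $v_iv_j$ in $(G',\Sigma')$, and no other edges. $[m]=\{1,\dots,m\}$. *)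

(* Defs.v *)
From mathcomp Require Import all_boot all_order all_algebra.
Set Implicit Arguments. Unset Strict Implicit. Unset Printing Implicit Defensive.
Import Order.TTheory GRing.Theory Num.Theory.
Local Open Scope ring_scope.

Record sgraph (T : finType) := SGraph {
  sg_adj : rel T;
  sg_odd : rel T;
  sg_adj_sym : forall x y, sg_adj x y = sg_adj y x;
  sg_adj_irr : forall x, sg_adj x x = false;
  sg_odd_sym : forall x y, sg_odd x y = sg_odd y x;
  sg_odd_sub : forall x y, sg_odd x y -> sg_adj x y
}.

Definition laplacian (R : pzRingType) (T : finType) (G : sgraph T)
  : 'M[R]_#|T| :=
  \matrix_(a, b)
    ((if a == b then (#|[set z | sg_adj G (enum_val a) z]|)%:R else 0)
     - (if sg_adj G (enum_val a) (enum_val b)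
        then (if sg_odd G (enum_val a) (enum_val b) then -1 else 1)
        else 0)).

Definition spectrum_is (R : comNzRingType) (m : nat) (A : 'M[R]_m) (s : seq R) :=
  char_poly A = \prod_(x <- s) ('X - x%:P).

(* Substitution: vertex set is the disjoint union {i : 'I_k & 'I_(n i)}
   of the vertex sets of the G_i (vertex v_i of G' is i : 'I_k). *)
Section Subst.
Variables (k : nat) (n : 'I_k -> nat) (G' : sgraph 'I_k)
          (Gs : forall i : 'I_k, sgraph 'I_(n i)).
Definition VT := {i : 'I_k & 'I_(n i)}.

Definition subst_adj (x y : VT) : bool :=
  if tag x == tag y then sg_adj (Gs (tag x)) (tagged x) (tagged_as x y)
  else sg_adj G' (tag x) (tag y).
Definition subst_odd (x y : VT) : bool :=
  if tag x == tag y then sg_odd (Gs (tag x)) (tagged x) (tagged_as x y)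
  else sg_odd G' (tag x) (tag y).

Lemma subst_adj_sym x y : subst_adj x y = subst_adj y x.
Proof.
rewrite /subst_adj eq_sym; case: eqP => [|_]; last exact: sg_adj_sym.
case: x y => [i a] [j b] /= eij; subst j.
by rewrite -[existT _ i a]/(Tagged (fun i : 'I_k => 'I_(n i)) a) -[existT _ i b]/(Tagged (fun i : 'I_k => 'I_(n i)) b) !tagged_asE sg_adj_sym.
Qed.
Lemma subst_adj_irr x : subst_adj x x = false.
Proof. by case: x => i a; rewrite /subst_adj eqxx -[existT _ i a]/(Tagged (fun i : 'I_k => 'I_(n i)) a) tagged_asE sg_adj_irr. Qed.
Lemma subst_odd_sym x y : subst_odd x y = subst_odd y x.
Proof.
rewrite /subst_odd eq_sym; case: eqP => [|_]; last exact: sg_odd_sym.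
case: x y => [i a] [j b] /= eij; subst j.
by rewrite -[existT _ i a]/(Tagged (fun i : 'I_k => 'I_(n i)) a) -[existT _ i b]/(Tagged (fun i : 'I_k => 'I_(n i)) b) !tagged_asE sg_odd_sym.
Qed.
Lemma subst_odd_sub x y : subst_odd x y -> subst_adj x y.
Proof. rewrite /subst_odd /subst_adj; case: ifP => _; exact: sg_odd_sub. Qed.

Definition substitute : sgraph VT :=
  SGraph subst_adj_sym subst_adj_irr subst_odd_sym subst_odd_sub.
End Subst.

(* Main.v *)
Require Import Defs.
From mathcomp Require Import all_boot all_order all_algebra.
From mathcomp Require Import fingroup perm zify.
Set Implicit Arguments. Unset Strict Implicit. Unset Printing Implicit Defensive.
Import Order.TTheory GRing.Theory Num.Theory.
Local Open Scope ring_scope.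

Section Gen.
Variable R : comNzRingType.

Lemma cp_ord p q (A : 'M[R]_p) (g : 'I_q -> 'I_p) : bijective g ->
  char_poly (\matrix_(i, j) A (g i) (g j)) = char_poly A.
Proof.
move=> bg; have eqqp : q = p by have := bij_eq_card bg; rewrite !card_ord.
subst q.
pose s : 'S_p := perm (bij_inj bg).
have E : char_poly_mx (\matrix_(i, j) A (g i) (g j))
   = perm_mx s *m char_poly_mx A *m perm_mx s^-1.
  rewrite -row_permE -col_permE; apply/matrixP => i j.
  by rewrite !mxE !permE (inj_eq (bij_inj bg)).
rewrite /char_poly E !det_mulmx !det_perm odd_permV mulrC mulrA -signr_addb addbb.
by rewrite mul1r.
Qed.

Definition mx (U : finType) (F : U -> U -> R) : 'M[R]_#|U| :=
  \matrix_(a, b) F (enum_val a) (enum_val b).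
Definition cp (U : finType) (F : U -> U -> R) := char_poly (mx F).

Lemma cpR (U W : finType) (h : W -> U) (F : U -> U -> R) : bijective h ->
  cp (fun a b => F (h a) (h b)) = cp F.
Proof.
move=> bh; rewrite /cp.
have bg : bijective (fun i : 'I_#|W| => enum_rank (h (enum_val i))).
  have := bij_comp (@enum_rank_bij U) (bij_comp bh (@enum_val_bij W)); exact.
rewrite -(cp_ord (mx F) bg).
by congr char_poly; apply/matrixP => i j; rewrite !mxE !enum_rankK.
Qed.

Lemma mx_mul (U : finType) (F G : U -> U -> R) :
  mx F *m mx G = mx (fun x y => \sum_z F x z * G z y).
Proof.
apply/matrixP => a b; rewrite !mxE [RHS](reindex (fun i : 'I_#|U| => enum_val i)) /=.
  by apply: eq_bigr => c _; rewrite !mxE.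
by apply: onW_bij; apply: enum_val_bij.
Qed.

Lemma mx1 (U : finType) : mx (fun x y : U => (x == y)%:R) = 1%:M.
Proof. by apply/matrixP => a b; rewrite !mxE (inj_eq enum_val_inj). Qed.

Lemma char_poly_sim n (A P Q : 'M[R]_n) : Q *m P = 1%:M ->
  char_poly (Q *m A *m P) = char_poly A.
Proof.
move=> QP; rewrite /char_poly.
have -> : char_poly_mx (Q *m A *m P)
    = map_mx polyC Q *m char_poly_mx A *m map_mx polyC P.
  rewrite /char_poly_mx mulmxBr mulmxBl -!map_mxM mul_mx_scalar -scalemxAl.
  by rewrite -map_mxM QP map_mx1 scalemx1.
by rewrite !det_mulmx mulrAC -det_mulmx -map_mxM QP map_mx1 det1 mul1r.
Qed.

Lemma cp_sim (U : finType) (F P Q : U -> U -> R) :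
  (forall x y, \sum_z Q x z * P z y = (x == y)%:R) ->
  cp (fun x y => \sum_z (\sum_w Q x w * F w z) * P z y) = cp F.
Proof.
move=> QP; rewrite /cp -!mx_mul char_poly_sim // mx_mul.
rewrite -mx1; apply/matrixP => a b; rewrite !mxE; exact: QP.
Qed.

Lemma char_poly_ublock p q (A : 'M[R]_p) X (D : 'M[R]_q) :
  char_poly (block_mx A X 0 D) = char_poly A * char_poly D.
Proof.
rewrite /char_poly /char_poly_mx map_block_mx map_mx0 scalar_mx_block.
by rewrite opp_block_mx add_block_mx oppr0 addr0 det_ublock.
Qed.

Lemma bij_surj (A B : finType) (h : A -> B) : injective h ->
  (forall b, exists a, h a = b) -> bijective h.
Proof.
move=> ih sh; apply: (inj_card_bij ih).
rewrite -(card_codom ih); apply/subset_leq_card/subsetP => b _.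
by have [a <-] := sh b; apply: codom_f.
Qed.

Lemma cp_empty (U : finType) (F : U -> U -> R) : #|U| = 0%N -> cp F = 1.
Proof. by move=> H; rewrite /cp; move: (mx F); rewrite H => A; rewrite /char_poly det_mx00. Qed.

End Gen.


Section Gen2.
Variable R : comNzRingType.

Lemma splitL m n (i : 'I_m) : split (lshift n i) = inl i.
Proof. exact: (@unsplitK m n (inl i)). Qed.
Lemma splitR m n (j : 'I_n) : split (rshift m j) = inr j.
Proof. exact: (@unsplitK m n (inr j)). Qed.

Lemma cp_split (U : finType) (F : U -> U -> R) (S : pred U) :
  (forall a b, ~~ S a -> S b -> F a b = 0) ->
  cp F = cp (fun a b : {x | S x} => F (val a) (val b))
       * cp (fun a b : {x | ~~ S x} => F (val a) (val b)).
Proof.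
move=> HF.
pose U1 : finType := {x | S x}; pose U2 : finType := {x | ~~ S x}.
pose h' (s : 'I_#|U1| + 'I_#|U2|) : U :=
  match s with inl i => val (enum_val i) | inr j => val (enum_val j) end.
have bh' : bijective h'.
  apply: inj_card_bij.
    move=> [i|j] [i'|j'] /= E.
    - by congr inl; apply/enum_val_inj/val_inj.
    - have Si : S (sval (enum_val i)) := valP (enum_val i).
      have Sj : ~~ S (sval (enum_val j')) := valP (enum_val j').
      by move: Sj; rewrite -E Si.
    - have Si : S (sval (enum_val i')) := valP (enum_val i').
      have Sj : ~~ S (sval (enum_val j)) := valP (enum_val j).
      by move: Sj; rewrite E Si.
    - by congr inr; apply/enum_val_inj/val_inj.
  rewrite card_sum !card_ord !card_sig -(cardC [pred x | S x]).
  by apply: eq_leq; congr (_ + _); apply: eq_card.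
have bs : bijective (@split #|U1| #|U2|).
  by exists unsplit; [exact: splitK | exact: unsplitK].
pose h t := h' (split t).
have bh : bijective h by exact: (bij_comp bh' bs).
have bg : bijective (fun t => enum_rank (h t)).
  have := bij_comp (@enum_rank_bij U) bh; exact.
rewrite /cp -(cp_ord (mx F) bg).
set B := \matrix_(i, j) _.
rewrite -[B]submxK.
have -> : dlsubmx B = 0.
  apply/matrixP => i j; rewrite !mxE !enum_rankK /h /= splitL splitR /=.
  by apply: HF; [exact: (valP (enum_val i)) | exact: (valP (enum_val j))].
rewrite char_poly_ublock.
have -> : ulsubmx B = mx (fun a b : {x | S x} => F (val a) (val b)).
  by apply/matrixP => i j; rewrite !mxE !enum_rankK /h /= ?splitL ?splitR.
have -> : drsubmx B = mx (fun a b : {x | ~~ S x} => F (val a) (val b)).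
  by apply/matrixP => i j; rewrite !mxE !enum_rankK /h /= ?splitL ?splitR.
by [].
Qed.

Lemma cp_blocks (I : finType) (N : nat) : forall (U : finType) (f : U -> I)
  (F : U -> U -> R), (#|U| <= N)%N -> (forall a b, f a != f b -> F a b = 0) ->
  cp F = \prod_(i : I) cp (fun a b : {x | f x == i} => F (val a) (val b)).
Proof.
have base : forall (U : finType) (f : U -> I) (F : U -> U -> R), #|U| = 0%N ->
  cp F = \prod_(i : I) cp (fun a b : {x | f x == i} => F (val a) (val b)).
  move=> U f F U0; rewrite cp_empty // big1 // => i _; apply: cp_empty.
  by apply/eqP; rewrite -leqn0 -U0 card_sig max_card.
elim: N => [|N IH] U f F HU HF.
  by apply: base; apply/eqP; rewrite -leqn0.
have [U0|/card_gt0P [u0 _]] := posnP #|U|; first exact: base.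
pose i0 := f u0.
rewrite (@cp_split _ F (fun x => f x == i0)); last first.
  by move=> a b /= na /eqP eb; apply: HF; rewrite eb.
rewrite (bigD1 i0) //=; congr (_ * _).
have c1 : (0 < #|[pred x | f x == i0]|)%N by apply/card_gt0P; exists u0; rewrite inE.
have c2 : (#|[pred x | f x == i0]| + #|[pred x | ~~ (f x == i0)]| = #|U|)%N.
  by rewrite -(cardC [pred x | f x == i0]); congr (_ + _); apply: eq_card => x; rewrite !inE.
rewrite (IH _ (fun y : {x | ~~ (f x == i0)} => f (val y))); first last.
- by move=> a b /HF.
- rewrite card_sig; move: HU c1 c2; lia.
rewrite (bigD1 i0) //= cp_empty ?mul1r; last first.
  rewrite card_sig; apply: eq_card0 => y; rewrite !inE.
  by apply/negbTE; apply: contraNN (valP y) => /eqP ->.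
apply: eq_bigr => i ni0.
pose h (y : {y : {x | ~~ (f x == i0)} | f (val y) == i}) : {x | f x == i} :=
  exist _ (val (val y)) (valP y).
have bh : bijective h.
  apply: bij_surj.
    by move=> y y' /(congr1 val) /= E; apply/val_inj/val_inj.
  move=> [x px]; have nx : ~~ (f x == i0) by rewrite (eqP px).
  by exists (exist _ (exist _ x nx) px); apply/val_inj.
exact: (cpR (fun a b : {x | f x == i} => F (val a) (val b)) bh).
Qed.

End Gen2.


Section Gen3.
Variable R : comNzRingType.

Lemma eq_cp (U : finType) (F G : U -> U -> R) :
  (forall x y, F x y = G x y) -> cp F = cp G.
Proof. by move=> E; rewrite /cp; congr char_poly; apply/matrixP => a b; rewrite !mxE E. Qed.

Lemma sum_deltal (U : finType) (x : U) (G : U -> R) :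
  \sum_z (x == z)%:R * G z = G x.
Proof.
rewrite (bigD1 x) //= eqxx mul1r big1 ?addr0 // => z nz.
by rewrite eq_sym (negbTE nz) mul0r.
Qed.

Lemma sum_deltar (U : finType) (y : U) (G : U -> R) :
  \sum_z G z * (z == y)%:R = G y.
Proof.
rewrite (bigD1 y) //= eqxx mulr1 big1 ?addr0 // => z nz.
by rewrite (negbTE nz) mulr0.
Qed.

Lemma cp_quot (U I : finType) (f : U -> I) (r : I -> U) (F : U -> U -> R)
  (B : I -> I -> R) :
  (forall i, f (r i) = i) ->
  (forall x j, \sum_(z | f z == j) F x z = B (f x) j) ->
  cp F = cp B * cp (fun a b : {x | ~~ (x == r (f x))} =>
                       F (val a) (val b) - F (r (f (val a))) (val b)).
Proof.
move=> fr HB.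
pose S x := x == r (f x).
have Sr i : S (r i) by rewrite /S fr.
have Suniq z x : (S z && (f z == f x)) = (z == r (f x)).
  apply/andP/eqP => [[/eqP Ez /eqP Efz]|->]; first by rewrite {1}Ez Efz.
  by split; [exact: Sr | rewrite fr].
pose P x y : R := if S y then (f x == f y)%:R else (x == y)%:R.
pose Q x y : R := (x == y)%:R - (S y && ~~ S x && (f x == f y))%:R.
have QG x (G : U -> R) : \sum_w Q x w * G w = G x - (~~ S x)%:R * G (r (f x)).
  rewrite /Q; under eq_bigr do rewrite mulrBl; rewrite sumrB sum_deltal.
  congr (_ - _); rewrite (bigD1 (r (f x))) //= big1 ?addr0.
    by rewrite Sr fr eqxx andbT.
  move=> z nz; rewrite andbAC [f x == f z]eq_sym Suniq (negbTE nz) /=.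
  by rewrite mul0r.
have QP x y : \sum_z Q x z * P z y = (x == y)%:R.
  rewrite QG /P fr; case Sy: (S y).
    case Sx: (S x) => /=.
      rewrite mul0r subr0; have -> // : (f x == f y) = (x == y).
      apply/eqP/eqP => [E|->//].
      by rewrite (eqP Sx) (eqP Sy) E.
    rewrite mul1r subrr; case: eqP => [Exy|//].
    by rewrite Exy Sy in Sx.
  have -> : (r (f x) == y) = false.
    by apply/negbTE; apply: contraFN Sy => /eqP <-; apply: Sr.
  by rewrite mulr0 subr0.
rewrite -(cp_sim F QP).
pose FP w y := \sum_z F w z * P z y.
have FPr w y : S y -> FP w y = B (f w) (f y).
  move=> Sy; rewrite /FP /P -HB [RHS]big_mkcond /=; apply: eq_bigr => z _.
  by rewrite Sy; case: (f z == f y); rewrite ?mulr1 ?mulr0.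
have FPn w y : ~~ S y -> FP w y = F w y.
  move=> Sy; rewrite /FP /P (negbTE Sy); exact: sum_deltar.
have ET x y : \sum_z (\sum_w Q x w * F w z) * P z y
              = FP x y - (~~ S x)%:R * FP (r (f x)) y.
  rewrite -(QG x (fun w => FP w y)) /FP; under eq_bigr do rewrite mulr_suml.
  rewrite exchange_big /=; apply: eq_bigr => w _; rewrite mulr_sumr.
  by apply: eq_bigr => z _; rewrite mulrA.
rewrite (eq_cp ET) (@cp_split _ _ _ S); last first.
  by move=> a b Sa Sb; rewrite Sa !FPr // fr /= mul1r subrr.
f_equal.
  pose h (i : I) : {x | S x} := exist _ (r i) (Sr i).
  have bh : bijective h.
    apply: bij_surj.
      by move=> i j /(congr1 val) /= /(congr1 f); rewrite !fr.
    by move=> [x Sx]; exists (f x); apply/val_inj => /=; rewrite -(eqP Sx).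
  rewrite -(cpR _ bh); apply: eq_cp => i j /=.
  by rewrite FPr ?Sr // !fr /= mul0r subr0.
rewrite /S; apply: eq_cp => a b; rewrite !FPn ?(valP a) ?mul1r //; exact: (valP b).
Qed.

End Gen3.


Section Gen4.
Variable R : comNzRingType.

Lemma char_poly_shift n (A : 'M[R]_n) c :
  char_poly (A + c%:M) = (char_poly A) \Po ('X - c%:P).
Proof.
rewrite /char_poly -det_map_mx; congr (\det _).
apply/matrixP => i j; rewrite !mxE.
case: eqP => _ /=; rewrite ?mulr1n ?mulr0n ?addr0 ?sub0r.
  by rewrite comp_polyB comp_polyX comp_polyC polyCD opprD addrA [RHS]addrAC.
by rewrite -polyCN comp_polyC.
Qed.

Lemma cp_shift (U : finType) (F : U -> U -> R) c :
  cp (fun x y => F x y + c * (x == y)%:R) = (cp F) \Po ('X - c%:P).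
Proof.
rewrite /cp -char_poly_shift; congr char_poly; apply/matrixP => a b.
by rewrite !mxE (inj_eq enum_val_inj) mulr_natr.
Qed.

Lemma cp_unit (c : R) : cp (fun _ _ : unit => c) = 'X - c%:P.
Proof.
have bg : bijective (fun _ : 'I_1 => @enum_rank unit tt).
  apply: (@inj_card_bij _ _ _ _); last by rewrite !card_ord card_unit.
  by move=> i j _; rewrite (ord1 i) (ord1 j).
rewrite /cp -(cp_ord (mx (fun _ _ : unit => c)) bg) /char_poly det_mx11.
by rewrite !mxE mulr1n.
Qed.

Lemma cp_ordE k (M : 'M[R]_k) : cp (fun i j : 'I_k => M i j) = char_poly M.
Proof. by rewrite /cp -(cp_ord M (@enum_val_bij _)). Qed.

Lemma row_sum (U : finType) (F : U -> U -> R) (l : R) :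
  mx F *m (const_mx 1 : 'cV_#|U|) = l *: const_mx 1 ->
  forall x, \sum_z F x z = l.
Proof.
move=> H x; have := congr1 (fun A : 'cV[R]_#|U| => A (enum_rank x) 0) H; rewrite !mxE mulr1 => <-.
rewrite [LHS](reindex (fun i : 'I_#|U| => enum_val i)) /=.
  by apply: eq_bigr => c _; rewrite !mxE enum_rankK mulr1.
by apply: onW_bij; apply: enum_val_bij.
Qed.

End Gen4.

Lemma seq_rcons_last (T : Type) (x0 : T) (s : seq T) : size s != 0%N ->
  s = rcons (take (size s).-1 s) (last x0 s).
Proof.
elim/last_ind: s => [|s' z _]; first by [].
move=> _; by rewrite size_rcons /= -cats1 take_size_cat // last_cat cats1.
Qed.


Definition lapF (R : pzRingType) (T : finType) (G : sgraph T) (x y : T) : R :=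
  (if x == y then (#|[set z | sg_adj G x z]|)%:R else 0)
  - (if sg_adj G x y then (if sg_odd G x y then -1 else 1) else 0).

Lemma laplacianE (R : comNzRingType) (T : finType) (G : sgraph T) :
  laplacian R G = mx (lapF R G).
Proof.
apply/matrixP => a b; rewrite !mxE /lapF; congr (_ - _); congr (if _ then _ else _).
by apply/eqP/eqP => [->//|]; apply: enum_val_inj.
Qed.

Section Sub.
Variables (k : nat) (n : 'I_k -> nat) (G' : sgraph 'I_k)
          (Gs : forall i : 'I_k, sgraph 'I_(n i)).
Local Notation G := (substitute G' Gs).
Local Notation V := (VT n).

Lemma adj_same i (a b : 'I_(n i)) :
  sg_adj G (Tagged _ a) (Tagged _ b) = sg_adj (Gs i) a b.
Proof. by rewrite /= /subst_adj /= eqxx tagged_asE. Qed.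
Lemma odd_same i (a b : 'I_(n i)) :
  sg_odd G (Tagged _ a) (Tagged _ b) = sg_odd (Gs i) a b.
Proof. by rewrite /= /subst_odd /= eqxx tagged_asE. Qed.
Lemma adj_diff (x y : V) : tag x != tag y -> sg_adj G x y = sg_adj G' (tag x) (tag y).
Proof. by move=> H; rewrite /= /subst_adj (negbTE H). Qed.
Lemma odd_diff (x y : V) : tag x != tag y -> sg_odd G x y = sg_odd G' (tag x) (tag y).
Proof. by move=> H; rewrite /= /subst_odd (negbTE H). Qed.

Lemma sum_tag (R : Type) (idx : R) (op : Monoid.com_law idx) (P : pred V) j (g : V -> R) :
  \big[op/idx]_(z : V | (tag z == j) && P z) g z =
  \big[op/idx]_(b : 'I_(n j) | P (Tagged _ b)) g (Tagged _ b).
Proof.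
rewrite -(big_pred1_eq op j (fun j => \big[op/idx]_(b : 'I_(n j) | P (Tagged _ b)) g (Tagged _ b))).
rewrite sig_big_dep /=.
by apply: eq_big => -[i a].
Qed.

Lemma deg_subst i (a : 'I_(n i)) :
  #|[set z | sg_adj G (Tagged _ a) z]| =
  (#|[set z | sg_adj (Gs i) a z]| + \sum_(j | sg_adj G' i j) n j)%N.
Proof.
rewrite -!sum1dep_card.
have -> : (\sum_(z : V | sg_adj G (Tagged _ a) z) 1 =
    \sum_j \sum_(b : 'I_(n j) | sg_adj G (Tagged _ a) (Tagged _ b)) 1)%N.
  rewrite (partition_big (fun z : V => tag z) xpredT) //=.
  apply: eq_bigr => j _; rewrite -(@sum_tag nat 0%N addn (fun z => sg_adj G (Tagged _ a) z) j (fun _ => 1%N)).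
  by apply: eq_bigl => z; rewrite andbC.
rewrite (bigD1 i) //=; congr (_ + _)%N.
  by apply: eq_bigl => b; apply: adj_same.
have E j : j != i -> (\sum_(b : 'I_(n j) | sg_adj G (Tagged _ a) (Tagged _ b)) 1
           = if sg_adj G' i j then n j else 0)%N.
  move=> nji; rewrite (eq_bigl (fun _ => sg_adj G' i j)) => [|b]; last first.
    by rewrite adj_diff //= eq_sym.
  case: (sg_adj G' i j); last by rewrite big_pred0.
  by rewrite sum1_card card_ord.
rewrite (eq_bigr _ E) [RHS]big_mkcond [RHS](bigD1 i) //= sg_adj_irr add0n.
by [].
Qed.

Lemma deg_subst' (x : V) :
  #|[set z | sg_adj G x z]| =
  (#|[set z | sg_adj (Gs (tag x)) (tagged x) z]| + \sum_(j | sg_adj G' (tag x) j) n j)%N.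
Proof. by case: x => i a; apply: deg_subst. Qed.

End Sub.

Section SubR.
Variables (R : comNzRingType) (k : nat) (n : 'I_k -> nat) (G' : sgraph 'I_k)
          (Gs : forall i : 'I_k, sgraph 'I_(n i)).
Local Notation G := (substitute G' Gs).
Local Notation V := (VT n).
Definition mdeg i := (\sum_(j | sg_adj G' i j) n j)%N.

Lemma F_same i (a b : 'I_(n i)) :
  lapF R G (Tagged _ a) (Tagged _ b) = lapF R (Gs i) a b + (mdeg i)%:R * (a == b)%:R.
Proof.
rewrite /lapF eq_Tagged /= deg_subst' /= /subst_adj /subst_odd /= eqxx !tagged_asE.
case: eqP => _; rewrite ?mulr1 ?mulr0 ?addr0 // natrD.
by rewrite addrAC.
Qed.

Lemma F_diff (x y : V) : tag x != tag y -> lapF R G x y =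
  - (if sg_adj G' (tag x) (tag y) then (if sg_odd G' (tag x) (tag y) then -1 else 1) else 0).
Proof.
move=> H; rewrite /lapF; have -> : (x == y) = false by apply: contraNF H => /eqP ->.
by rewrite adj_diff // odd_diff // sub0r.
Qed.

Lemma sum_tag0 j (g : V -> R) :
  \sum_(z : V | tag z == j) g z = \sum_(b : 'I_(n j)) g (Tagged _ b).
Proof.
rewrite -(sum_tag _ xpredT); apply: eq_bigl => z; by rewrite andbT.
Qed.

Lemma F_rowsum (l : 'I_k -> R) :
  (forall i (a : 'I_(n i)), \sum_b lapF R (Gs i) a b = l i) ->
  forall (x : V) j, \sum_(z | tag z == j) lapF R G x z =
    (if tag x == j then l (tag x) + (mdeg (tag x))%:R
     else if sg_adj G' (tag x) j then
       (if sg_odd G' (tag x) j then (n j)%:R else - (n j)%:R)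
     else 0).
Proof.
move=> hrow [i a] j; rewrite sum_tag0 /=.
case: (eqVneq i j) => [<-|nij].
  rewrite (eq_bigr (fun b => lapF R (Gs i) a b + (mdeg i)%:R * (a == b)%:R)); last first.
    by move=> b _; apply: F_same.
  rewrite big_split /= hrow; congr (_ + _).
  rewrite (eq_bigr (fun b => (a == b)%:R * (mdeg i)%:R)) ?sum_deltal //.
  by move=> b _; rewrite mulrC.
rewrite (eq_bigr (fun _ => - (if sg_adj G' i j then (if sg_odd G' i j then -1 else 1) else 0)))
  ; last by move=> b _; apply: F_diff.
rewrite sumr_const card_ord.
case: (sg_adj G' i j); last by rewrite oppr0 mul0rn.
by case: (sg_odd G' i j); rewrite ?opprK // mulNrn.
Qed.

End SubR.


Unset Implicit Arguments.
Theorem lemma3p6 (R : realFieldType) (k : nat) (n : 'I_k -> nat)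
  (G' : sgraph 'I_k) (Gs : forall i : 'I_k, sgraph 'I_(n i))
  (lam : forall i : 'I_k, seq R) (mu : seq R) :
  (forall i, (0 < n i)%N) ->
  (forall i, size (lam i) = n i) ->
  (forall i, spectrum_is (laplacian R (Gs i)) (lam i)) ->
  let m := fun i : 'I_k => (\sum_(j : 'I_k | sg_adj G' i j) n j)%N in
  let M : 'M[R]_k := \matrix_(i, j)
      (if i == j then last 0 (lam i) + (m i)%:R
       else if sg_adj G' i j then
         (if sg_odd G' i j then (n j)%:R else - (n j)%:R)
       else 0) in
  spectrum_is M mu ->
  (forall i, laplacian R (Gs i) *m (const_mx 1 : 'cV_#|'I_(n i)|)
             = last 0 (lam i) *: const_mx 1) ->
  spectrum_is (laplacian R (substitute G' Gs))
    (mu ++ flatten [seq [seq x + (m i)%:R | x <- take (n i).-1 (lam i)]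
                   | i <- enum 'I_k]).
Proof.
move=> hn hsize hspec m M hmu h1.
pose r0 i : 'I_(n i) := Ordinal (hn i).
pose l i := last 0 (lam i).
have hrow i (a : 'I_(n i)) : \sum_b lapF R (Gs i) a b = l i.
  by apply: row_sum; rewrite -laplacianE; exact: h1.
have lvl2 i : cp (fun a b : {x : 'I_(n i) | x != r0 i} =>
      lapF R (Gs i) (val a) (val b) - lapF R (Gs i) (r0 i) (val b))
    = \prod_(x <- take (n i).-1 (lam i)) ('X - x%:P).
  have Hq := @cp_quot R 'I_(n i) unit (fun _ => tt) (fun _ => r0 i)
     (lapF R (Gs i)) (fun _ _ => l i) (fun u => match u with tt => erefl end)
     (fun x j => match j with tt => hrow i x end).
  move: Hq; rewrite cp_unit /cp -laplacianE hspec.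
  rewrite {1}(@seq_rcons_last _ 0 (lam i)); last by rewrite hsize -lt0n.
  rewrite -cats1 big_cat big_seq1 hsize => Hq.
  apply: (mulfI (x := 'X - (l i)%:P)); first by rewrite polyXsubC_eq0.
  by rewrite -Hq [RHS]mulrC.
pose r i : VT n := Tagged (fun i => 'I_(n i)) (r0 i).
have rs1 (x : VT n) j :
    \sum_(z | tag z == j) lapF R (substitute G' Gs) x z = M (tag x) j.
  by rewrite (F_rowsum G' hrow) /M mxE.
have Hq := @cp_quot R (VT n) 'I_k (fun x => tag x) r (lapF R (substitute G' Gs))
   (fun i j => M i j) (fun i => erefl) rs1.
rewrite /spectrum_is.
have -> : char_poly (laplacian R (substitute G' Gs)) = cp (lapF R (substitute G' Gs)).
  by rewrite laplacianE.
rewrite Hq cp_ordE hmu big_cat /=; f_equal.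
rewrite (@cp_blocks R 'I_k _ _ (fun y => tag (val y)) _ (leqnn _)); last first.
  by move=> [x nx] [y ny] /= H; rewrite !F_diff //= subrr.
rewrite big_flatten big_map big_enum /=; apply: eq_bigr => i _.
rewrite big_map.
have pf (b : {x : 'I_(n i) | x != r0 i}) :
    ~~ ((Tagged (fun i => 'I_(n i)) (val b) : VT n) ==
        r (tag (Tagged (fun i => 'I_(n i)) (val b) : VT n))).
  by rewrite /= eq_Tagged /=; exact: (valP b).
pose h (b : {x : 'I_(n i) | x != r0 i}) :
    {y : {x : VT n | ~~ (x == r (tag x))} | tag (val y) == i} :=
  exist (fun y : {x : VT n | ~~ (x == r (tag x))} => tag (val y) == i)
    (exist (fun x : VT n => ~~ (x == r (tag x)))
       (Tagged (fun i => 'I_(n i)) (val b)) (pf b)) (eqxx i).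
have bh : bijective h.
  apply: bij_surj.
    move=> b b' E; have := congr1 (fun y => val (val y)) E.
    move=> /= /eqP; rewrite eq_Tagged /= => /eqP E'; exact: val_inj E'.
  move=> [[[j a] nx] tx].
  have tx' : j = i by exact: (eqP tx).
  subst j.
  have na : a != r0 i by move: (nx); rewrite /= eq_Tagged.
  by exists (exist _ a na); apply/val_inj/val_inj.
rewrite -(cpR _ bh).
rewrite (@eq_cp _ _ _ (fun a b : {x : 'I_(n i) | x != r0 i} =>
   (lapF R (Gs i) (val a) (val b) - lapF R (Gs i) (r0 i) (val b))
   + (m i)%:R * (a == b)%:R)); last first.
  move=> a b.
  rewrite [LHS](_ : _ = (lapF R (Gs i) (val a) (val b) + (m i)%:R * (val a == val b)%:R)
       - (lapF R (Gs i) (r0 i) (val b) + (m i)%:R * (r0 i == val b)%:R)); last first.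
    by congr (_ - _); apply: F_same.
  rewrite [r0 i == _]eq_sym (negbTE (valP b)) mulr0 addr0 addrAC.
  by [].
rewrite cp_shift lvl2 rmorph_prod; apply: eq_bigr => x _.
by rewrite /= comp_polyB comp_polyX comp_polyC polyCD opprD addrA addrAC.
Qed.
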